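(* Let $q>0$ and let $Q_1,Q_2,\dots\in\mathcal{P}_q$. Let $\mathcal{G}_\kappa$ be the RKHS of $\mathbb{R}^D$-valued functions of a matrix-valued kernel $\kappa:\mathbb{R}^D\times\mathbb{R}^D\to\mathbb{R}^{D\times D}$. Suppose that for every $\varepsilon>0$ there exist $r_\varepsilon>0$ and $g\in\mathcal{G}_\kappa$ with $\mathcal{T}_Pg(x)\ge\|x\|_2^q\mathbf{1}\{\|x\|_2>r_\varepsilon\}-\varepsilon$ for all $x\in\mathbb{R}^D$. If $\mathcal{S}(Q_n,\mathcal{T}_P,\mathcal{G}_\kappa)\to0$ as $n\to\infty$, then $(Q_n)$ has uniformly integrable $q$-th moments.
   Context: $\mathcal{T}_P$ is the diffusion Stein operator $\mathcal{T}_Pg(x)=\frac1{p(x)}\langle\nabla,p(x)m(x)g(x)\rangle=2\langle b(x),g(x)\rangle+\langle m(x),\nabla g(x)\rangle$ for a target density $p$ on $\mathbb{R}^D$, where $m=\sigma\sigma^\top+c$ with $c$ skew-symmetric, $b=\langle\nabla,pm\rangle/(2p)$ (column-wise divergence $\langle\nabla,F\rangle_i=\sum_j\partial_jF_{ji}$), $(\nabla g)_{ij}=\partial_ig_j$ and $\langle\cdot,\cdot\rangle$ the Frobenius pairing. $\mathcal{S}(Q,\mathcal{T}_P,\mathcal{G}_\kappa)=\sup_{\|g\|_{\mathcal{G}_\kappa}\le1}|\mathbb{E}_{Y\sim Q}[\mathcal{T}_Pg(Y)]|$. $\mathcal{P}_q$ is the set of probability measures with finite $q$-th moment; $(Q_n)$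 has uniformly integrable $q$-th moments if $\lim_{r\to\infty}\limsup_{n}\int_{\{\|x\|_2>r\}}\|x\|_2^q dQ_n=0$. *)

(* Defs.v *)
From HB Require Import structures.
From mathcomp Require Import all_boot all_order all_algebra.
From mathcomp Require Import all_classical all_reals all_analysis.
Set Implicit Arguments.
Unset Strict Implicit.
Unset Printing Implicit Defensive.
Import Order.TTheory GRing.Theory Num.Theory.
Import numFieldNormedType.Exports.
Local Open Scope classical_set_scope.
Local Open Scope ring_scope.

Section Defs.
Variables (R : realType) (D : nat).

Definition vecfun := 'rV[R]_D -> 'rV[R]_D.

Definition RD := g_sigma_algebraType (@open 'rV[R]_D).

Definition dotv (u v : 'rV[R]_D) : R := \sum_(i < D) u ord0 i * v ord0 i.
Definition norm2 (x : 'rV[R]_D) : R := Num.sqrt (\sum_(i < D) x ord0 i ^+ 2).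

Definition partial (j : 'I_D) (f : 'rV[R]_D -> R) (x : 'rV[R]_D) : R :=
  'D_(delta_mx ord0 j) f x.

Definition diff_m K (sigma : 'rV[R]_D -> 'M[R]_(D, K)) (c : 'rV[R]_D -> 'M[R]_D)
  (x : 'rV[R]_D) : 'M[R]_D := sigma x *m (sigma x)^T + c x.

(* b = <nabla, p m> / (2 p), column-wise divergence:
   b_i = (sum_j d_j (p m_{ji})) / (2 p) *)
Definition diff_b (p : 'rV[R]_D -> R) (m : 'rV[R]_D -> 'M[R]_D)
  (x : 'rV[R]_D) : 'rV[R]_D :=
  \row_(i < D) ((\sum_(j < D) partial j (fun y => p y * m y j i) x) / (2 * p x)).

(* Diffusion Stein operator T_P g = 2 <b, g> + <m, nabla g>,
   (nabla g)_{ij} = d_i g_j, Frobenius pairing. *)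
Definition stein_op (p : 'rV[R]_D -> R) (m : 'rV[R]_D -> 'M[R]_D) (g : vecfun)
  (x : 'rV[R]_D) : R :=
  2 * dotv (diff_b p m x) (g x)
  + \sum_(i < D) \sum_(j < D) m x i j * partial i (fun y => g y ord0 j) x.

Definition ipnorm (ip : vecfun -> vecfun -> R) (g : vecfun) : R := Num.sqrt (ip g g).

Definition is_vvRKHS (kappa : 'rV[R]_D -> 'rV[R]_D -> 'M[R]_D)
  (H : set vecfun) (ip : vecfun -> vecfun -> R) : Prop :=
      H (fun _ => 0) /\
      (forall f g, H f -> H g -> H (fun x => f x + g x)) /\
      (forall (a : R) f, H f -> H (fun x => a *: f x)) /\
      (forall f g, H f -> H g -> ip f g = ip g f) /\
      (forall (a b : R) f g h, H f -> H g -> H h ->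
         ip (fun x => a *: f x + b *: g x) h = a * ip f h + b * ip g h) /\
      (forall f, H f -> 0 <= ip f f) /\
      (forall f, H f -> ip f f = 0 -> f = (fun _ => 0)) /\
      (forall u : nat -> vecfun, (forall n, H (u n)) ->
         (forall e : R, 0 < e -> exists N, forall m n, (N <= m)%N -> (N <= n)%N ->
            ipnorm ip (fun x => u m x - u n x) < e) ->
         exists2 g, H g & ipnorm ip (fun x => u n x - g x) @[n --> \oo] --> (0 : R)) /\
      (* kernel sections kappa(., x) a belong to H and reproduce point evaluation *)
      (forall x (a : 'rV[R]_D), H (fun y => a *m (kappa y x)^T)) /\
      (forall g x (a : 'rV[R]_D), H g -> ip g (fun y => a *m (kappa y x)^T) = dotv (g x) a).

Definition stein_disc (Q : probability RD R) (T : vecfun -> 'rV[R]_D -> R)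
  (H : set vecfun) (ip : vecfun -> vecfun -> R) : \bar R :=
  ereal_sup [set `| (\int[Q]_x (T g x)%:E)%E |%E | g in [set g | H g /\ ipnorm ip g <= 1]].

Definition finite_moment (q : R) (Q : probability RD R) : Prop :=
  (\int[Q]_x ((norm2 x) `^ q)%:E < +oo)%E.

Definition unif_integrable_moments (q : R) (Q : nat -> probability RD R) : Prop :=
  (fun r : R => limn_esup (fun n =>
     (\int[Q n]_(x in [set x : RD | (r < norm2 x)%R]) ((norm2 x) `^ q)%:E)%E))
    @ +oo --> 0%E.

End Defs.

(* Main.v *)
Require Import Defs.
From HB Require Import structures.
From mathcomp Require Import all_boot all_order all_algebra.
From mathcomp Require Import all_classical all_reals all_analysis.
From mathcomp Require Import ring lra measurable_realfun.
Import Order.TTheory GRing.Theory Num.Theory.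
Import numFieldNormedType.Exports.
Local Open Scope classical_set_scope.
Local Open Scope ring_scope.
Section S1.
Variables (R : realType) (D : nat).

Lemma norm2_cont : continuous (@norm2 R D).
Proof.
move=> x; apply: continuous_comp; last exact: sqrt_continuous.
apply: (@continuous_big _ _ _ _ _ add_continuous) => i _ y.
rewrite /continuous_at; under eq_cvg do rewrite expr2.
have hc := @coord_continuous R 1 D ord0 i.
rewrite expr2; exact: (cvgM (hc y) (hc y)).
Qed.

Lemma norm2_meas : measurable_fun setT (@norm2 R D : RD R D -> R).
Proof.
apply: (measurability _ (measurable_realfun.RGenOpens.measurableE R)).
move=> _ [_ [a [b ->] <-]]; rewrite setTI.
apply: sub_sigma_algebra.
by apply: (proj1 (@continuousP _ _ _) norm2_cont); exact: interval_open.
Qed.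
End S1.
Section S2.
Variables (R : realType) (D : nat).

Lemma comp_derivable (g : vecfun R D) x j v : differentiable g x ->
  derivable (fun y => g y ord0 j) x v.
Proof.
move=> dg; apply: diff_derivable.
apply: (@differentiable_comp _ _ _ _ g (fun N : 'rV[R]_D => N ord0 j)) => //.
exact: differentiable_coord.
Qed.

Lemma stein_opZ p m (g : vecfun R D) (a : R) x : differentiable g x ->
  stein_op p m (fun y => a *: g y) x = a * stein_op p m g x.
Proof.
move=> dg; rewrite /stein_op /dotv.
have hp i j : partial i (fun y => (a *: g y) ord0 j) x =
    a * partial i (fun y => g y ord0 j) x.
  rewrite /partial (_ : (fun y => _) = a \*: (fun y => g y ord0 j)); last first.
    by apply/funext => y; rewrite !mxE.
  by rewrite deriveZ //; exact: comp_derivable.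
rewrite mulrDr; congr (_ + _).
  rewrite mulrCA; congr (_ * _); rewrite mulr_sumr; apply: eq_bigr => i _.
  have -> : (a *: g x) ord0 i = a * g x ord0 i by rewrite mxE.
  ring.
rewrite mulr_sumr; apply: eq_bigr => i _; rewrite mulr_sumr; apply: eq_bigr => j _.
rewrite hp; ring.
Qed.

Lemma ipnorm_scale (G : set (vecfun R D)) (ip : vecfun R D -> vecfun R D -> R)
  (g : vecfun R D) (a : R) :
  (forall f g, G f -> G g -> ip f g = ip g f) ->
  (forall (a b : R) f g h, G f -> G g -> G h ->
         ip (fun x => a *: f x + b *: g x) h = a * ip f h + b * ip g h) ->
  (forall (a : R) f, G f -> G (fun x => a *: f x)) ->
  G g -> 0 <= a -> ipnorm ip (fun x => a *: g x) = a * ipnorm ip g.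
Proof.
move=> Hsym Hlin Hsc Gg a0.
have e : (fun x => a *: g x) = (fun x => a *: g x + 0 *: g x).
  by apply/funext => x; rewrite scale0r addr0.
have Gag := Hsc a g Gg.
have h : ip (fun x => a *: g x) (fun x => a *: g x) = a ^+ 2 * ip g g.
  rewrite [X in ip X _]e Hlin // mul0r addr0 Hsym // e Hlin // mul0r addr0.
  by rewrite mulrA expr2.
rewrite /ipnorm h sqrtrM ?sqr_ge0 // sqrtr_sqr ger0_norm //.
Qed.
End S2.
Section S3.
Local Open Scope ereal_scope.
Context d (T : measurableType d) (R : realType).

Lemma int_shift (P : probability T R) (u : T -> R) (e : R) : (0 <= e)%R ->
  measurable_fun setT u -> (forall x, (- e <= u x)%R) ->
  \int[P]_x ((u x + e)%R)%:E = \int[P]_x (u x)%:E + e%:E.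
Proof.
move=> e0 mu ue.
have eP x : (fun x => (u x)%:E)^\+ x = (Num.max (u x) 0%R)%:E by rewrite funeposE EFin_max.
have eN x : (fun x => (u x)%:E)^\- x = (Num.max (- u x) 0%R)%:E by rewrite funenegE EFin_max EFinN.
have mU : measurable_fun setT (EFin \o u) by exact/measurable_EFinP.
have mP : measurable_fun setT (fun x => (Num.max (u x) 0%R)%:E).
  by rewrite (_ : (fun x => _) = (fun x => (u x)%:E)^\+); [exact: measurable_funepos|apply/funext => x; rewrite eP].
have mN : measurable_fun setT (fun x => (Num.max (- u x) 0%R)%:E).
  by rewrite (_ : (fun x => _) = (fun x => (u x)%:E)^\-); [exact: measurable_funeneg|apply/funext => x; rewrite eN].
have mE : measurable_fun setT (fun x => (e - Num.max (- u x) 0%R)%:E).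
  apply/measurable_EFinP; apply: measurable_funB => //.
  apply: measurable_maxr => //; exact: measurableT_comp.
rewrite [\int[P]_x (u x)%:E]integralE.
under eq_integral do rewrite eP.
under [\int[P]_x (fun x => (u x)%:E)^\- x]eq_integral do rewrite eN.
have h1 : \int[P]_x ((u x + e)%R)%:E = \int[P]_x (Num.max (u x) 0%R)%:E
     + \int[P]_x (e - Num.max (- u x) 0%R)%:E.
  rewrite -ge0_integralD //; last first.
  - by move=> x _ /=; rewrite lee_fin subr_ge0 ge_max e0 andbT; have := ue x; lra.
  - by move=> x _ /=; rewrite lee_fin le_max lexx orbT.
  apply: eq_integral => x _; rewrite -EFinD; congr EFin.
  case: (leP 0%R (u x)) => h.
    by rewrite max_r; [ring|lra].
  by rewrite max_l; [ring|lra].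
have h2 : \int[P]_x (e - Num.max (- u x) 0%R)%:E
     + \int[P]_x (Num.max (- u x) 0%R)%:E = e%:E.
  rewrite -ge0_integralD //; last first.
  - by move=> x _ /=; rewrite lee_fin le_max lexx orbT.
  - by move=> x _ /=; rewrite lee_fin subr_ge0 ge_max e0 andbT; have := ue x; lra.
  under eq_integral do rewrite -EFinD subrK.
  rewrite integral_cst //; transitivity (e%:E * 1); last exact: mule1.
  by congr (_ * _); exact: probability_setT.
rewrite h1; move: h2.
have n0 : 0 <= \int[P]_x (Num.max (- u x) 0%R)%:E.
  by apply: integral_ge0 => x _; rewrite lee_fin le_max lexx orbT.
have b0 : 0 <= \int[P]_x (e - Num.max (- u x) 0%R)%:E.
  apply: integral_ge0 => x _; rewrite lee_fin subr_ge0 ge_max e0 andbT; have := ue x; lra.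
have a0 : 0 <= \int[P]_x (Num.max (u x) 0%R)%:E.
  by apply: integral_ge0 => x _; rewrite lee_fin le_max lexx orbT.
move: n0 b0 a0.
case: (\int[P]_x (Num.max (- u x) 0%R)%:E) => [n| |] //;
case: (\int[P]_x (e - Num.max (- u x) 0%R)%:E) => [b| |] //;
case: (\int[P]_x (Num.max (u x) 0%R)%:E) => [a| |] //=.
- move=> _ _ _ [] h; rewrite -!EFinD; congr EFin; lra.
Qed.

Lemma key_bound (P : probability T R) (u f : T -> R) (A : set T) (c e : R) :
  measurable A -> measurable_fun setT u -> measurable_fun A f ->
  (0 < c)%R -> (0 <= e)%R ->
  (forall x, (- e <= u x)%R) -> (forall x, A x -> (0 <= f x)%R) ->
  (forall x, A x -> (f x <= c * (u x + e))%R) ->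
  \int[P]_(x in A) (f x)%:E <= c%:E * (\int[P]_x (u x)%:E + e%:E).
Proof.
move=> mA mu mf c0 e0 ue f0 fle.
have ue0 x : (0 <= u x + e)%R by have := ue x; lra.
have mue : measurable_fun setT (fun x => (c * (u x + e))%R%:E).
  apply/measurable_EFinP; apply: measurable_funM => //.
  by apply: measurable_funD => //.
rewrite -int_shift //.
apply: (@le_trans _ _ (\int[P]_(x in A) (c * (u x + e))%R%:E)).
  apply: ge0_le_integral => //; first exact/measurable_EFinP.
  exact: measurable_funS mue.
apply: (@le_trans _ _ (\int[P]_(x in setT) (c * (u x + e))%R%:E)).
  apply: ge0_subset_integral => //.
  by move=> x _ /=; rewrite lee_fin mulr_ge0 // ltW.
under eq_integral do rewrite EFinM.
rewrite ge0_integralZl_EFin //; last exact: ltW.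
- by move=> x _ /=; rewrite lee_fin.
- apply/measurable_EFinP; exact: measurable_funD.
Qed.
End S3.

Theorem mainTheorem5 (R : realType) (D K : nat)
  (p : 'rV[R]_D -> R) (sigma : 'rV[R]_D -> 'M[R]_(D, K)) (c : 'rV[R]_D -> 'M[R]_D)
  (kappa : 'rV[R]_D -> 'rV[R]_D -> 'M[R]_D)
  (G : set (vecfun R D)) (ip : vecfun R D -> vecfun R D -> R)
  (q : R) (Q : nat -> probability (RD R D) R) :
  (* target density p > 0; c skew-symmetric *)
  (forall x, 0 < p x) ->
  (forall x, (c x)^T = - c x) ->
  (* G is the RKHS of kappa *)
  is_vvRKHS kappa G ip ->
  (* regularity making T_P g well defined and Q-measurable, for g in G *)
  (forall g, G g -> forall x, differentiable g x) ->
  (forall g, G g -> measurable_fun setT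
     (stein_op p (diff_m sigma c) g : RD R D -> R)) ->
  0 < q ->
  (forall n, finite_moment q (Q n)) ->
  (forall eps : R, 0 < eps -> exists2 r : R, 0 < r &
     exists2 g, G g & forall x : 'rV[R]_D,
       stein_op p (diff_m sigma c) g x >=
         (norm2 x `^ q) * ((r < norm2 x)%R : bool)%:R - eps) ->
  stein_disc (Q n) (stein_op p (diff_m sigma c)) G ip @[n --> \oo] --> 0%E ->
  unif_integrable_moments q Q.
Proof.
move=> p0 cskew [H0 [Hadd [Hscal [Hsym [Hlin [Hpos [Hdef _]]]]]]] Hdiff Hmeas q0 Hmom Hcond Hcvg.
set T := stein_op p (diff_m sigma c).
set S := fun n => stein_disc (Q n) T G ip.
set I := fun n r => (\int[Q n]_(x in [set x : RD R D | (r < norm2 x)%R]) ((norm2 x) `^ q)%:E)%E.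
have claim : forall eps : R, 0 < eps -> exists r0 : R, forall r, r0 <= r ->
    (0 <= limn_esup (fun n => I n r) <= eps%:E)%E.
  move=> eps e0.
  pose e2 := eps / 2.
  have e20 : 0 < e2 by rewrite divr_gt0.
  have [re re0 [g Gg hg]] := Hcond e2 e20.
  pose C := Num.max (ipnorm ip g) 1.
  have C1 : 1 <= C by rewrite le_max lexx orbT.
  have C0 : 0 < C by apply: lt_le_trans C1.
  pose g' := fun x => C^-1 *: g x.
  have Gg' : G g' := Hscal _ _ Gg.
  have ng0 : 0 <= ipnorm ip g by apply: sqrtr_ge0.
  have ng' : ipnorm ip g' <= 1.
    rewrite /g' (@ipnorm_scale R D G ip g _ Hsym Hlin Hscal Gg); last by rewrite invr_ge0 ltW.
    rewrite ler_pdivrMl // mulr1 le_max lexx //.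
  have Tg' x : T g' x = C^-1 * T g x by rewrite /T stein_opZ //; exact: Hdiff.
  have mu : measurable_fun setT (T g' : RD R D -> R) := Hmeas g' Gg'.
  have f0 (x : 'rV[R]_D) : 0 <= norm2 x `^ q * ((re < norm2 x)%R : bool)%:R.
    by rewrite mulr_ge0 ?powR_ge0.
  have ue x : - (e2 / C) <= T g' x.
    rewrite Tg' (_ : - (e2 / C) = C^-1 * (- e2)); last by rewrite mulrN mulrC.
    apply: ler_wpM2l; first by rewrite invr_ge0 ltW.
    by have := hg x; have := f0 x; rewrite /T; lra.
  have HS n : (\int[Q n]_x (T g' x)%:E <= S n)%E.
    apply: le_trans (lee_abs _) _; apply: ereal_sup_ubound.
    by exists g'.
  have Cn0 : C != 0 by rewrite gt_eqF.
  have Hb n r : re <= r -> (I n r <= C%:E * S n + e2%:E)%E.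
    move=> rer.
    have mA : measurable [set x : RD R D | r < norm2 x].
      have -> : [set x : RD R D | r < norm2 x] = setT `&` (@norm2 R D @^-1` `]r, +oo[).
        by apply/seteqP; split => x /=; rewrite in_itv /= andbT => // -[].
      exact: norm2_meas measurableT _ (measurable_itv _).
    have mf : measurable_fun [set x : RD R D | r < norm2 x] (fun x => norm2 x `^ q).
      apply: (measurable_funS measurableT) => //.
      have -> : (fun x : RD R D => norm2 x `^ q) = (@powR R ^~ q) \o (@norm2 R D) by [].
      have h1 := measurable_powR (R:=R) q. have h2 := @norm2_meas R D. have h3 := measurableT_comp h1 h2. exact: h3.
    apply: le_trans (@key_bound _ _ R (Q n) (T g') (fun x => norm2 x `^ q)
       [set x : RD R D | r < norm2 x] C (e2 / C) mA mu mf C0 _ ue _ _) _.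
    - by rewrite divr_ge0 // ltW.
    - by move=> x _; rewrite powR_ge0.
    - move=> x /= rx; rewrite Tg'.
      have := hg x; rewrite (_ : (re < norm2 x) = true); last first.
        by apply/idP; apply: le_lt_trans rx.
      rewrite mulr1 => h.
      have -> : C * (C^-1 * T g x + e2 / C) = T g x + e2 by field.
      by rewrite /T; lra.
    apply: le_trans (lee_wpmul2l _ (leeD2r _ (HS n))) _; first by rewrite lee_fin ltW.
    rewrite muleDr //; last by [apply: fin_num_adde_defr | apply: fin_num_adde_defl].
    by rewrite -EFinM (_ : C * (e2 / C) = e2) //; field.
  have ev : \forall n \near \oo, (S n <= (e2 / C)%:E)%E.
    move/fine_cvgP: Hcvg => [Hfin Hf].
    move/cvgrPdist_le : Hf => /(_ (e2/C) (divr_gt0 e20 C0)) Hf.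
    apply: filterS2 Hfin Hf => n fn.
    rewrite sub0r normrN /= -[X in (X <= _)%E](fineK fn) lee_fin.
    by apply: le_trans; apply: ler_norm.
  exists re => r rer; apply/andP; split.
    rewrite /limn_esup; apply: limf_esup_ge0; first exact: filter_not_empty.
    by move=> n; apply: integral_ge0 => x _; rewrite lee_fin powR_ge0.
  rewrite /limn_esup limf_esupE.
  apply: (@le_trans _ _ (ereal_sup [set I n r | n in [set n | (S n <= (e2/C)%:E)%E]])).
    by apply: ereal_inf_lbound; exists [set n | (S n <= (e2/C)%:E)%E].
  apply: ge_ereal_sup => _ [n hn <-].
  apply: le_trans (Hb n r rer) _.
  apply: le_trans (leeD2r _ (lee_wpmul2l _ hn)) _; first by rewrite lee_fin ltW.
  by rewrite -EFinM -EFinD lee_fin (_ : C * (e2 / C) + e2 = eps) // /e2; field.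
rewrite /unif_integrable_moments.
apply/fine_cvgP; split.
  have [r0 h] := claim 1 ltr01.
  near=> r.
  have hr : r0 <= r by near: r; exists r0; split; [exact: num_real| by move=> x /ltW].
  have /andP[a b] := h r hr.
  by rewrite ge0_fin_numE // (le_lt_trans b) // ltey.
apply/cvgrPdist_le => e e0.
have [r0 h] := claim e e0.
near=> r.
have hr : r0 <= r by near: r; exists r0; split; [exact: num_real| by move=> x /ltW].
have /andP[] := h r hr.
rewrite /=; case: (limn_esup _) => //= x.
by rewrite sub0r normrN !lee_fin => x0 xe; rewrite ger0_norm.
Unshelve. all: by end_near.
Qed.
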